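(* There are absolute constants $C,c>0$ such that the following holds. Let $P$ be a set of $n$ points in $\mathbb{R}^2$ in general position, let $\Pi\subseteq\binom{P}{2}$, let $0<\epsilon\le 1$, $0<\sigma\le 1$, and let $r\ge1$ be an integer. Then every subfamily ${\cal K}\subseteq{\cal K}(P,\Pi,\epsilon,\sigma)$ admits a point transversal (a set of points meeting every member of ${\cal K}$) of cardinality at most $$C\left(r\cdot f_2(c\,\epsilon\,\sigma\, r)+\frac{r^2|\Pi|}{\sigma\,\epsilon^2 n^2}\right).$$
   Context: General position: no three points of $P$ are collinear and no two lie on a common vertical line. $\binom{P}{2}$ denotes the set of all segments (edges) spanned by pairs of points of $P$. A convex set $K$ is $(\epsilon,\sigma)$-restricted to the graph $(P,\Pi)$ if $P\cap K$ contains a subset $P_K$ of exactly $\lceil\epsilon n\rceil$ points such that $\Pi_K:=\binom{P_K}{2}\cap\Pi$ contains at least $\sigma\binom{\lceil \epsilon n\rceil}{2}$ edges. ${\cal K}(P,\Pi,\epsilon,\sigma)$ denotes the family of all convex sets that are $(\epsilon,\sigma)$-restricted to $(P,\Pi)$. $f_2(x)$ denotes the smallest integer $f$ such that every finite point set $P'\subset\mathbb{R}^2$ admits a set of at most $f$ points meeting every convex set $K$ with $|K\cap P'|\ge x|P'|$; by convention $f_2(x)=1$ for $x\ge 1$. *)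

(* Defs.v *)
From Stdlib Require Import Reals List ClassicalEpsilon.
Import ListNotations.
Open Scope R_scope.

Definition point : Type := (R * R)%type.

Definition pcomb (t : R) (p q : point) : point :=
  ((1 - t) * fst p + t * fst q, (1 - t) * snd p + t * snd q).

Definition convex (K : point -> Prop) : Prop :=
  forall p q t, K p -> K q -> 0 <= t <= 1 -> K (pcomb t p q).

Definition collinear (a b c : point) : Prop :=
  (fst b - fst a) * (snd c - snd a) - (snd b - snd a) * (fst c - fst a) = 0.

Definition general_position (P : list point) : Prop :=
  NoDup P /\
  (forall a b c, In a P -> In b P -> In c P -> a <> b -> a <> c -> b <> c ->
     ~ collinear a b c) /\
  (forall a b, In a P -> In b P -> a <> b -> fst a <> fst b).

Fixpoint pairs (l : list point) : list (point * point) :=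
  match l with
  | [] => []
  | x :: l' => map (fun y => (x, y)) l' ++ pairs l'
  end.

(* a graph Pi ⊆ binom(P,2) is given by a symmetric boolean edge predicate E;
   its edge set on a point list Q is the set of pairs of Q that are edges *)
Definition num_edges (E : point -> point -> bool) (Q : list point) : nat :=
  length (filter (fun e => E (fst e) (snd e)) (pairs Q)).

Definition restricted (P : list point) (E : point -> point -> bool)
    (eps sigma : R) (K : point -> Prop) : Prop :=
  exists PK : list point,
    NoDup PK /\ incl PK P /\ Forall K PK /\
    (* length PK = ceil (eps * n) *)
    eps * INR (length P) <= INR (length PK) < eps * INR (length P) + 1 /\
    sigma * (INR (length PK) * (INR (length PK) - 1) / 2) <= INR (num_edges E PK).

Definition in_calK (P : list point) (E : point -> point -> bool)
    (eps sigma : R) (K : point -> Prop) : Prop :=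
  convex K /\ restricted P E eps sigma K.

Definition wenet_bound (x : R) (f : nat) : Prop :=
  forall P' : list point, NoDup P' -> P' <> [] ->
    exists T : list point, (length T <= f)%nat /\
      forall K : point -> Prop, convex K ->
        (exists S : list point, NoDup S /\ incl S P' /\ Forall K S /\
            x * INR (length P') <= INR (length S)) ->
        exists t, In t T /\ K t.

Definition f2 (x : R) : nat :=
  if Rle_dec 1 x then 1%nat
  else epsilon (inhabits 0%nat)
         (fun f => wenet_bound x f /\ forall g, wenet_bound x g -> (f <= g)%nat).

(* Main.v *)
Require Import Defs.
From Stdlib Require Import Reals List.
Open Scope R_scope.
From Stdlib Require Import Bool ZArith Lra Lia Permutation Sorted Classical ClassicalEpsilon.
Import ListNotations. Open Scope bool_scope.
Open Scope R_scope.

Lemma Permutation_filter_length {A} (g : A -> bool) (l l' : list A) :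
  Permutation l l' -> length (filter g l) = length (filter g l').
Proof.
  induction 1; simpl; auto.
  - destruct (g x); simpl; auto.
  - destruct (g x), (g y); simpl; auto.
  - congruence.
Qed.

Lemma filter_length_all {A} (g : A -> bool) (l : list A) :
  (length l <= length (filter g l))%nat -> forall x, In x l -> g x = true.
Proof.
  induction l as [|a l IH]; simpl; intros H x Hx; [contradiction|].
  pose proof (filter_length_le g l).
  destruct (g a) eqn:Ga; simpl in H.
  - destruct Hx; [subst; auto| apply IH; auto; lia].
  - lia.
Qed.

Lemma filter_nil_existsb {A} (g : A -> bool) (l : list A) :
  existsb g l = false -> filter g l = [].
Proof.
  induction l; simpl; auto. destruct (g a); simpl; auto; discriminate.
Qed.

Lemma SS_app {A} (Rl : A -> A -> Prop) (l1 l2 : list A) :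
  StronglySorted Rl (l1 ++ l2) ->
  StronglySorted Rl l2 /\ forall a b, In a l1 -> In b l2 -> Rl a b.
Proof.
  induction l1 as [|x l1 IH]; simpl; intros H.
  - split; auto. intros; contradiction.
  - inversion H; subst. destruct (IH H2) as [H4 H5]. split; auto.
    intros a b [<-|Ha] Hb; auto.
    rewrite Forall_forall in H3. apply H3, in_or_app; auto.
Qed.

Lemma SS_last {A} (h : A -> R) (l : list A) (c : A) :
  StronglySorted (fun a b => h a <= h b) (l ++ [c]) -> forall i, In i (l ++ [c]) -> h i <= h c.
Proof.
  intros H i Hi. destruct (SS_app _ _ _ H) as [_ H2].
  apply in_app_or in Hi. destruct Hi as [Hi|[<-|[]]]; [|lra].
  apply H2; simpl; auto.
Qed.

Lemma sort_insert {A} (h : A -> R) (a : A) (l : list A) :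
  StronglySorted (fun a b => h a <= h b) l ->
  exists l', Permutation (a :: l) l' /\ StronglySorted (fun a b => h a <= h b) l'.
Proof.
  induction l as [|b l IH]; intros H.
  - exists [a]; split; auto. repeat constructor.
  - inversion H; subst.
    destruct (Rle_dec (h a) (h b)) as [Hab|Hab].
    + exists (a :: b :: l); split; auto. constructor; auto.
      constructor; auto. rewrite Forall_forall in *. intros y Hy. apply H3 in Hy. lra.
    + destruct (IH H2) as [l' [P S]]. exists (b :: l'); split.
      * eapply perm_trans; [apply perm_swap|]. constructor; auto.
      * constructor; auto. rewrite Forall_forall in *. intros y Hy.
        apply (Permutation_in _ (Permutation_sym P)) in Hy. destruct Hy as [<-|Hy]; [lra|auto].
Qed.

Lemma sort_exists {A} (h : A -> R) (l : list A) :
  exists l', Permutation l l' /\ StronglySorted (fun a b => h a <= h b) l'.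
Proof.
  induction l as [|a l IH].
  - exists []; split; constructor.
  - destruct IH as [l1 [P1 S1]]. destruct (sort_insert h a l1 S1) as [l2 [P2 S2]].
    exists l2; split; auto. eapply perm_trans; [constructor; exact P1|exact P2].
Qed.

Lemma quant_sorted {A} (h : A -> R) (T : nat) (HT : (0 < T)%nat) :
  forall n (L : list A), (length L <= n)%nat -> StronglySorted (fun a b => h a <= h b) L ->
  exists Z : list R, (length Z * T <= length L)%nat /\
    forall g : A -> bool, (T <= length (filter g L))%nat ->
      exists z, In z Z /\ exists i j, In i L /\ g i = true /\ In j L /\ g j = true /\ h i <= z <= h j.
Proof.
  induction n as [|n IH]; intros L HL HS.
  - exists []; split; simpl; [lia|]. intros g Hg. pose proof (filter_length_le g L). lia.
  - destruct (Nat.lt_ge_cases (length L) T) as [Hs|Hs].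
    + exists []; split; simpl; [lia|]. intros g Hg. pose proof (filter_length_le g L). lia.
    + pose proof (firstn_skipn T L) as HCD.
      set (C := firstn T L) in *. set (D := skipn T L) in *.
      assert (HlC : length C = T) by (unfold C; rewrite length_firstn; lia).
      assert (HlD : length D = (length L - T)%nat) by (unfold D; rewrite length_skipn; lia).
      destruct (exists_last (l := C)) as [C' [c HC']].
      { intro E. rewrite E in HlC. simpl in HlC. lia. }
      rewrite HC' in HCD. rewrite <- HCD in HS.
      destruct (SS_app _ _ _ HS) as [SD Hlt].
      assert (SC : StronglySorted (fun a b => h a <= h b) (C' ++ [c])).
      { clear -HS. induction C' as [|x C' IH]; simpl in *.
        - repeat constructor.
        - inversion HS; subst. constructor; auto. rewrite Forall_forall in *.
          intros y Hy. apply H2. apply in_or_app; left; exact Hy. }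
      destruct (IH D ltac:(lia) SD) as [Z' [HZ' HZ'g]].
      exists (h c :: Z'). split; [simpl; lia|].
      intros g Hg.
      assert (InL : forall y, In y (C' ++ [c]) \/ In y D -> In y L).
      { intros y Hy. rewrite <- HCD. apply in_or_app. destruct Hy; auto. }
      destruct (existsb g (C' ++ [c])) eqn:EC; destruct (existsb g D) eqn:ED.
      * apply existsb_exists in EC as [i [Hi Gi]]. apply existsb_exists in ED as [j [Hj Gj]].
        exists (h c); split; [left; auto|]. exists i, j. repeat split; auto.
        -- apply (SS_last h C' c SC i Hi).
        -- apply (Hlt c j); auto. apply in_or_app; right; left; auto.
      * apply filter_nil_existsb in ED.
        rewrite <- HCD, filter_app, ED, app_nil_r in Hg.
        assert (Gc : g c = true).
        { apply (filter_length_all g (C' ++ [c])). rewrite <- HC', HlC. rewrite HC'. exact Hg.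
          apply in_or_app; right; left; auto. }
        exists (h c); split; [left; auto|]. exists c, c.
        assert (In c L) by (apply InL; left; apply in_or_app; right; left; auto).
        repeat split; auto; lra.
      * apply filter_nil_existsb in EC.
        rewrite <- HCD, filter_app, EC in Hg. simpl in Hg.
        destruct (HZ'g g Hg) as [z [Hz [i [j [? [? [? [? ?]]]]]]]].
        exists z; split; [right; auto|]. exists i, j; repeat split; auto; tauto.
      * apply filter_nil_existsb in EC. apply filter_nil_existsb in ED.
        rewrite <- HCD, filter_app, EC, ED in Hg. simpl in Hg. lia.
Qed.

Lemma quantile {A} (h : A -> R) (T : nat) (HT : (0 < T)%nat) (L : list A) :
  exists Z : list R, (length Z * T <= length L)%nat /\
    forall g : A -> bool, (T <= length (filter g L))%nat ->
      exists z, In z Z /\ exists i j, In i L /\ g i = true /\ In j L /\ g j = true /\ h i <= z <= h j.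
Proof.
  destruct (sort_exists h L) as [L' [P S]].
  destruct (quant_sorted h T HT (length L') L' (le_n _) S) as [Z [HZ HZg]].
  exists Z; split; [rewrite (Permutation_length P); auto|].
  intros g Hg. rewrite (Permutation_filter_length g _ _ P) in Hg.
  destruct (HZg g Hg) as [z [Hz [i [j [? [? [? [? ?]]]]]]]].
  exists z; split; auto. exists i, j. apply Permutation_sym in P.
  repeat split; try tauto; eapply Permutation_in; eauto.
Qed.

Lemma frac01 u v : 0 <= u <= v -> 0 < v -> 0 <= u / v <= 1.
Proof.
  intros H Hv. unfold Rdiv. split.
  - apply Rmult_le_pos; [lra|left; apply Rinv_0_lt_compat; lra].
  - apply Rmult_le_reg_r with v; [lra|]. rewrite Rmult_assoc, Rinv_l; lra.
Qed.

Definition cross (x0 : R) (pr : point * point) : point :=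
  let (a, b) := pr in
  if Req_EM_T (fst a) (fst b) then a else pcomb ((x0 - fst a) / (fst b - fst a)) a b.

Lemma cross_fst x0 a b : fst a <= x0 <= fst b -> fst (cross x0 (a, b)) = x0.
Proof.
  intros H. unfold cross. destruct (Req_EM_T (fst a) (fst b)); [lra|].
  unfold pcomb; simpl. field. lra.
Qed.

Lemma cross_in (K : point -> Prop) x0 a b : convex K -> K a -> K b ->
  fst a <= x0 <= fst b -> K (cross x0 (a, b)).
Proof.
  intros HK Ha Hb H. unfold cross. destruct (Req_EM_T (fst a) (fst b)); auto.
  apply HK; auto. apply frac01; lra.
Qed.

Lemma vert_between (K : point -> Prop) x0 p q y : convex K -> K p -> K q ->
  fst p = x0 -> fst q = x0 -> snd p <= y <= snd q -> K (x0, y).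
Proof.
  intros HK Hp Hq Fp Fq Hy. destruct p as [px py], q as [qx qy]; simpl in *. subst px qx.
  destruct (Req_EM_T py qy) as [E|E].
  - subst. replace y with qy by lra. auto.
  - replace (x0, y) with (pcomb ((y - py) / (qy - py)) (x0, py) (x0, qy)).
    + apply HK; auto. apply frac01; lra.
    + unfold pcomb; simpl. f_equal; field; lra.
Qed.

Lemma line_hit (x0 : R) (Pr : list (point * point)) (T : nat) (HT : (0 < T)%nat) :
  (forall pr, In pr Pr -> fst (fst pr) <= x0 <= fst (snd pr)) ->
  exists Z : list point, (length Z * T <= length Pr)%nat /\
  forall (g : point * point -> bool) (K : point -> Prop), convex K ->
    (forall pr, In pr Pr -> g pr = true -> K (fst pr) /\ K (snd pr)) ->
    (T <= length (filter g Pr))%nat -> exists z, In z Z /\ K z.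
Proof.
  intros HPr.
  destruct (quantile (fun pr => snd (cross x0 pr)) T HT Pr) as [Zy [HZ HZg]].
  exists (map (fun y => (x0, y)) Zy). split; [rewrite length_map; auto|].
  intros g K HK Hg Hc.
  destruct (HZg g Hc) as [y [Hy [i [j [Hi [Gi [Hj [Gj Hb]]]]]]]].
  exists (x0, y); split; [apply in_map; auto|].
  destruct i as [ia ib], j as [ja jb].
  destruct (Hg _ Hi Gi), (Hg _ Hj Gj). pose proof (HPr _ Hi); pose proof (HPr _ Hj). simpl fst in *; simpl snd in H, H0, H1, H2.
  apply (vert_between K x0 (cross x0 (ia, ib)) (cross x0 (ja, jb))).
  - exact HK.
  - apply cross_in; auto.
  - apply cross_in; auto.
  - apply cross_fst; auto.
  - apply cross_fst; auto.
  - exact Hb.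
Qed.

Lemma split_lemma (Q : list point) (k : nat) : (k <= length Q)%nat ->
  exists L R x0, Permutation Q (L ++ R) /\ length L = k /\
    (forall a, In a L -> fst a <= x0) /\ (forall b, In b R -> x0 <= fst b).
Proof.
  unfold point in *. intros Hk. destruct (sort_exists fst Q) as [Q' [P S]].
  exists (firstn k Q'), (skipn k Q').
  pose proof (firstn_skipn k Q') as E.
  assert (HS := S). rewrite <- E in HS. destruct (SS_app _ _ _ HS) as [SR H].
  destruct (skipn k Q') as [|b R'] eqn:ER.
  - assert (Hn : Q' = [] \/ exists C c, Q' = C ++ [c]).
    { destruct Q' as [|q0 Q0]; [left; auto|right].
      destruct (exists_last (l := q0 :: Q0)) as [C [c Hc]]; [discriminate|]. exists C, c; auto. }
    destruct Hn as [Hn|Hn].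
    + exists 0. repeat split.
      * rewrite app_nil_r in *; rewrite E; auto.
      * rewrite length_firstn. pose proof (Permutation_length P). lia.
      * subst Q'. rewrite app_nil_r in *. simpl in *. intros a Ha. destruct k; simpl in Ha; contradiction.
      * intros _ [].
    + destruct Hn as [C [c Hc]]. exists (fst c). repeat split.
      * rewrite app_nil_r in *; rewrite E; auto.
      * rewrite length_firstn. pose proof (Permutation_length P). lia.
      * intros a Ha. rewrite app_nil_r in E; rewrite E in Ha. rewrite Hc in S, Ha.
        apply (SS_last fst C c S a Ha).
      * intros _ [].
  - exists (fst b). repeat split.
    + rewrite E; auto.
    + rewrite length_firstn. pose proof (Permutation_length P). lia.
    + intros a Ha. apply H; simpl; auto.
    + intros b' [<-|Hb']; [lra|]. inversion SR; subst. rewrite Forall_forall in H3. apply H3; auto.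
Qed.

Definition F2 (F : point -> point -> bool) (pr : point * point) : bool := F (fst pr) (snd pr).

Lemma cntmap (F : point -> point -> bool) x l :
  length (filter (F2 F) (map (fun y => (x, y)) l)) = length (filter (F x) l).
Proof. induction l; simpl; auto. unfold F2 at 1; simpl. destruct (F x a); simpl; auto. Qed.

Lemma num_edges_perm (F : point -> point -> bool) (HF : forall a b, F a b = F b a) l l' :
  Permutation l l' -> num_edges F l = num_edges F l'.
Proof.
  unfold num_edges. induction 1; simpl; auto.
  - rewrite !filter_app. rewrite !length_app. fold (F2 F). rewrite !cntmap.
    rewrite (Permutation_filter_length _ _ _ H). unfold F2 in *. lia.
  - rewrite (HF y x). destruct (F x y); simpl;
    rewrite !filter_app, !length_app; fold (F2 F); rewrite !cntmap; lia.
  - congruence.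
Qed.

Lemma num_edges_app (F : point -> point -> bool) L R :
  num_edges F (L ++ R) = (num_edges F L + num_edges F R + length (filter (F2 F) (list_prod L R)))%nat.
Proof.
  unfold num_edges. revert R. induction L as [|a L IH]; intros R0; simpl; [lia|].
  rewrite !filter_app, !length_app, map_app, filter_app, length_app. fold (F2 F) in *.
  rewrite IH. lia.
Qed.

Lemma filter_filter' {A} (f g : A -> bool) l : filter f (filter g l) = filter (fun x => g x && f x) l.
Proof. induction l; simpl; auto. destruct (g a); simpl; auto. destruct (f a); simpl; congruence. Qed.

Lemma filter_map_pair {A} (g : A -> bool) x (l : list A) :
  filter (fun pr => g (fst pr) && g (snd pr)) (map (fun y => (x, y)) l) =
  if g x then map (fun y => (x, y)) (filter g l) else [].
Proof.
  induction l as [|a l IHl]; simpl; [destruct (g x); auto|]. rewrite IHl.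
  destruct (g x), (g a); simpl; auto.
Qed.

Lemma pairs_filter (k : point -> bool) l :
  pairs (filter k l) = filter (fun pr => k (fst pr) && k (snd pr)) (pairs l).
Proof.
  induction l as [|a l IH]; simpl; auto.
  rewrite filter_app, filter_map_pair. destruct (k a); simpl; rewrite IH; auto.
Qed.

Definition Fk (F : point -> point -> bool) (k : point -> bool) a b := F a b && (k a && k b).

Lemma num_edges_filter F k l : num_edges F (filter k l) = num_edges (Fk F k) l.
Proof.
  unfold num_edges. rewrite pairs_filter, filter_filter'. f_equal.
  apply filter_ext. intros [a b]; unfold Fk; simpl. destruct (F a b), (k a), (k b); auto.
Qed.

Lemma cnt_prod (k : point -> bool) L R :
  length (filter (fun pr => k (fst pr) && k (snd pr)) (list_prod L R)) =
  (length (filter k L) * length (filter k R))%nat.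
Proof.
  induction L as [|a L IH]; simpl; auto.
  rewrite filter_app, length_app, filter_map_pair, IH. destruct (k a); simpl; auto.
  rewrite length_map; auto.
Qed.

Definition point_eq_dec (p q : point) : {p = q} + {p <> q}.
Proof. destruct p as [a b], q as [c d]. destruct (Req_EM_T a c), (Req_EM_T b d); subst; auto;
  right; intro H; inversion H; auto. Defined.

Definition memb (S : list point) (p : point) : bool := if in_dec point_eq_dec p S then true else false.

Lemma memb_true S p : memb S p = true <-> In p S.
Proof. unfold memb; destruct (in_dec point_eq_dec p S); split; auto; discriminate. Qed.

Lemma perm_memb S P : NoDup S -> NoDup P -> incl S P -> Permutation S (filter (memb S) P).
Proof.
  intros HS HP HI. apply NoDup_Permutation; auto. apply NoDup_filter; auto.
  intros x; rewrite filter_In, memb_true. split; [intros; split; auto|tauto].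
Qed.

Lemma count_memb S P : NoDup S -> NoDup P -> incl S P -> length (filter (memb S) P) = length S.
Proof. intros. symmetry. apply Permutation_length, perm_memb; auto. Qed.

Lemma nat_ceil (y : R) : 0 < y -> exists N : nat, (0 < N)%nat /\ y <= INR N /\ INR N <= y + 1.
Proof.
  intros Hy. destruct (archimed y) as [H1 H2].
  assert (Hz : (0 < up y)%Z) by (apply lt_0_IZR; lra).
  exists (Z.to_nat (up y)).
  assert (E : INR (Z.to_nat (up y)) = IZR (up y)) by (rewrite INR_IZR_INZ, Z2Nat.id; [reflexivity|lia]).
  split; [apply INR_lt; rewrite E; simpl; lra|rewrite E; lra].
Qed.

Lemma pow54 (k : nat) : 1 + INR k / 4 <= (5/4) ^ k.
Proof.
  induction k as [|k IH]; [simpl; lra|]. rewrite S_INR. rewrite <- tech_pow_Rmult. pose proof (pos_INR k). nra.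
Qed.

Lemma nat_min_exists (Pn : nat -> Prop) : (exists n, Pn n) -> exists n, Pn n /\ forall m, Pn m -> (n <= m)%nat.
Proof.
  intros [n Hn]. induction n as [n IH] using (well_founded_induction lt_wf).
  destruct (classic (exists m, (m < n)%nat /\ Pn m)) as [[m [Hm Pm]]|H].
  - exact (IH m Hm Pm).
  - exists n; split; auto. intros m Pm. destruct (Nat.lt_ge_cases m n); auto.
    exfalso; apply H; eauto.
Qed.

Lemma wenet_use x f : wenet_bound x f -> forall L : list point, NoDup L ->
  exists TL : list point, (length TL <= f)%nat /\
    forall K : point -> Prop, convex K ->
      forall S, NoDup S -> incl S L -> Forall K S -> x * INR (length L) <= INR (length S) ->
      (0 < length S)%nat -> exists t, In t TL /\ K t.
Proof.
  intros Hw L HL. destruct L as [|p L'].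
  - exists []; split; simpl; [lia|]. intros K _ S _ HI _ _ HS.
    destruct S as [|s S]; simpl in HS; [lia|]. exfalso; apply (HI s); simpl; auto.
  - destruct (Hw (p :: L') HL ltac:(discriminate)) as [T [HT HTK]].
    exists T; split; auto. intros K HK S HS HI HF Hx _. apply HTK; auto. exists S; auto.
Qed.

Lemma wenet_big x : 1 < x -> wenet_bound x 0.
Proof.
  intros Hx P' HP Hne. exists []; split; auto. intros K _ [S [HS [HI [_ Hl]]]].
  exfalso. pose proof (NoDup_incl_length HS HI).
  destruct P' as [|p P'']; [congruence|]. simpl length in *.
  apply le_INR in H. rewrite S_INR in *. pose proof (pos_INR (length P'')). nra.
Qed.

Lemma filter_memb_props (S L : list point) (K : point -> Prop) :
  NoDup L -> Forall K S ->
  NoDup (filter (memb S) L) /\ incl (filter (memb S) L) L /\ Forall K (filter (memb S) L).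
Proof.
  intros HL HF. split; [apply NoDup_filter; auto|split].
  - intros y Hy. apply filter_In in Hy; tauto.
  - rewrite Forall_forall in *. intros y Hy. apply filter_In in Hy. apply HF, memb_true; tauto.
Qed.

Lemma wenet_step x f' : 0 < x -> wenet_bound (5/4 * x) f' ->
  exists f, wenet_bound x f.
Proof.
  intros Hx Hw.
  destruct (nat_ceil (2 / (x * x))) as [N [_ [HN1 _]]].
  { apply Rdiv_lt_0_compat; nra. }
  exists (5 + 2 * f' + N)%nat.
  intros P' HP Hne.
  set (n := length P').
  destruct (le_lt_dec n 5) as [Hn|Hn].
  { exists P'; split; [unfold n in Hn; lia|].
    intros K HK [S [HS [HI [HF Hl]]]].
    destruct S as [|s S].
    - exfalso. assert (H0 : (0 < n)%nat) by (unfold n; destruct P'; simpl; [congruence|lia]).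
      apply lt_0_INR in H0. simpl length in Hl. change (INR 0) with 0 in Hl. nra.
    - exists s. split; [apply HI; simpl; auto|]. inversion HF; auto. }
  assert (Hk : exists k, (n = 2 * k \/ n = 2 * k + 1)%nat)
    by (destruct (Nat.Even_or_Odd n) as [[k Hk]|[k Hk]]; exists k; lia).
  destruct Hk as [k Hk].
  destruct (split_lemma P' k) as [L [Rr [x0 [HP' [HL [HxL HxR]]]]]]; [unfold n in Hk; lia|].
  assert (HLR : (length L + length Rr = n)%nat)
    by (unfold n; rewrite (Permutation_length HP'), length_app; auto).
  assert (H2L : (2 * length L <= n + 1)%nat) by lia.
  assert (H2R : (2 * length Rr <= n + 1)%nat) by lia.
  apply le_INR in H2L, H2R. rewrite mult_INR, plus_INR in H2L, H2R. simpl INR in H2L, H2R.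
  assert (Hsz : INR (length L) <= (INR n + 1) / 2 /\ INR (length Rr) <= (INR n + 1) / 2) by lra.
  clear Hk HL H2L H2R.
  assert (HNL : NoDup (L ++ Rr)) by (apply (Permutation_NoDup HP'); auto).
  apply NoDup_app_remove_r in HNL as HNL1; apply NoDup_app_remove_l in HNL as HNL2.
  destruct (wenet_use _ _ Hw L HNL1) as [TL [HTL HTLK]].
  destruct (wenet_use _ _ Hw Rr HNL2) as [TR [HTR HTRK]].
  assert (Hnpos : 5 < INR n) by (apply lt_INR in Hn; simpl in Hn; lra).
  destruct (nat_ceil (x * x * INR n * INR n / 8)) as [T0 [HT0 [HT1 HT2]]];
       [apply Rdiv_lt_0_compat; [|lra]; apply Rmult_lt_0_compat; [nra|lra]|].
  destruct (line_hit x0 (list_prod L Rr) T0 HT0) as [Z [HZ HZK]];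
       [intros [a b] Hab; apply in_prod_iff in Hab; simpl; split; [apply HxL|apply HxR]; tauto|].
  exists (TL ++ TR ++ Z); split.
  { rewrite !length_app.
    assert (HZN : (length Z <= N)%nat).
    { apply INR_le. rewrite length_prod in HZ. apply le_INR in HZ. rewrite !mult_INR in HZ.
      assert (Hp : INR (length L) * INR (length Rr) <= INR n * INR n / 4).
      { rewrite <- HLR, plus_INR. pose proof (pos_INR (length L)). pose proof (pos_INR (length Rr)). pose proof (Rle_0_sqr (INR (length L) - INR (length Rr))). unfold Rsqr in *. nra. }
      assert (Hq : INR (length Z) * (x * x * INR n * INR n / 8) <= INR n * INR n / 4).
      { pose proof (pos_INR (length Z)). pose proof (pos_INR T0). nra. }
      apply Rle_trans with (2 / (x * x)); [|exact HN1].
      apply Rmult_le_reg_r with (x * x * INR n * INR n / 8).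
      { apply Rdiv_lt_0_compat; [|lra]. apply Rmult_lt_0_compat; [nra|lra]. }
      replace (2 / (x * x) * (x * x * INR n * INR n / 8)) with (INR n * INR n / 4) by (field; lra).
      exact Hq. }
    lia. }
  intros K HK [S [HS [HI [HF Hl]]]].
  set (a := length (filter (memb S) L)); set (b := length (filter (memb S) Rr)).
  assert (Hab : (a + b)%nat = length S)
         by (unfold a, b; rewrite <- length_app, <- filter_app, <- (Permutation_filter_length _ _ _ HP');
             apply count_memb; auto).
  destruct (le_lt_dec T0 (a * b)) as [Hc|Hc].
  { assert (G : forall pr, In pr (list_prod L Rr) -> memb S (fst pr) && memb S (snd pr) = true -> K (fst pr) /\ K (snd pr)).
    { intros [p q] _ G; simpl in G; apply andb_prop in G as [G1 G2]; apply memb_true in G1, G2.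
      rewrite Forall_forall in HF; simpl; auto. }
    assert (C : (T0 <= length (filter (fun pr => memb S (fst pr) && memb S (snd pr)) (list_prod L Rr)))%nat)
      by (rewrite cnt_prod; exact Hc).
    destruct (HZK _ K HK G C) as [z [Hz Kz]].
    exists z; split; [rewrite !in_app_iff; auto|auto]. }
  assert (Hab2 : INR a * INR b <= x * x * INR n * INR n / 8)
         by (assert (Hc' : (Nat.succ (a * b) <= T0)%nat) by exact Hc; apply le_INR in Hc'; rewrite S_INR, mult_INR in Hc'; lra).
  rewrite <- Hab, plus_INR in Hl.
  pose proof (pos_INR a); pose proof (pos_INR b).
  assert (Hbig : 3 / 4 * x * INR n <= INR a \/ 3 / 4 * x * INR n <= INR b)
         by (destruct (Rle_dec (3 / 4 * x * INR n) (INR a)); [left; auto|right];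
             destruct (Rle_dec (3 / 4 * x * INR n) (INR b)); auto; exfalso;
             assert ((INR a - x * INR n / 4) * (INR b - x * INR n / 4) >= 0) by (apply Rle_ge, Rmult_le_pos; nra);
             nra).
  destruct (filter_memb_props S L K HNL1 HF) as [A1 [A2 A3]].
  destruct (filter_memb_props S Rr K HNL2 HF) as [B1 [B2 B3]].
  destruct Hbig as [Hbig|Hbig].
  try (destruct (HTLK K HK (filter (memb S) L) A1 A2 A3) as [t [Ht Kt]];
       [ fold a; nra
       | apply INR_lt; fold a; simpl; nra
       | exists t; split; [rewrite !in_app_iff; auto|auto] ]).
  try (destruct (HTRK K HK (filter (memb S) Rr) B1 B2 B3) as [t [Ht Kt]];
       [ fold b; nra
       | apply INR_lt; fold b; simpl; nra
       | exists t; split; [rewrite !in_app_iff; auto|auto] ]).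
Qed.

Lemma wenet_exists_k (k : nat) : forall x, 0 < x -> 1 < x * (5/4) ^ k -> exists f, wenet_bound x f.
Proof.
  induction k as [|k IH]; intros x Hx H.
  - exists 0%nat. apply wenet_big. simpl in H. lra.
  - destruct (IH (5/4 * x)) as [f' Hf']; [lra| rewrite <- tech_pow_Rmult in H; lra|].
    exact (wenet_step x f' Hx Hf').
Qed.

Lemma wenet_exists x : 0 < x -> exists f, wenet_bound x f.
Proof.
  intros Hx. destruct (nat_ceil (4 / x)) as [k [_ [Hk _]]]; [apply Rdiv_lt_0_compat; lra|].
  apply (wenet_exists_k k x Hx). pose proof (pow54 k).
  assert (x * (INR k / 4) >= 1).
  { apply Rle_ge. apply Rmult_le_reg_r with (/ x * 4); [apply Rmult_lt_0_compat; [apply Rinv_0_lt_compat; lra|lra]|].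
    replace (x * (INR k / 4) * (/ x * 4)) with (INR k) by (field; lra).
    replace (1 * (/ x * 4)) with (4 / x) by (field; lra). lra. }
  nra.
Qed.

Lemma wenet_one x : 1 <= x -> wenet_bound x 1.
Proof.
  intros Hx P' HP Hne. destruct P' as [|p P'']; [congruence|].
  exists [p]; split; [simpl; lia|]. intros K _ [S [HS [HI [HF Hl]]]].
  assert (Hle : (length (p :: P'') <= length S)%nat).
  { apply INR_le. pose proof (pos_INR (length (p :: P''))). nra. }
  pose proof (NoDup_length_incl HS Hle HI) as HI2.
  exists p; split; [simpl; auto|]. rewrite Forall_forall in HF. apply HF, HI2; simpl; auto.
Qed.

Lemma wenet_pos x f : 0 < x <= 1 -> wenet_bound x f -> (1 <= f)%nat.
Proof.
  intros Hx Hw. destruct (Hw [(0,0)]) as [T [HT HTK]]; [repeat constructor; simpl; tauto|discriminate|].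
  destruct (HTK (fun _ => True)) as [t [Ht _]].
  - intros p q t _ _ _; auto.
  - exists [(0,0)]. split; [constructor; [simpl; tauto|constructor]|].
    split; [intros y Hy; exact Hy|]. split; [constructor; auto|]. simpl length. change (INR 1) with 1. lra.
  - destruct T; [contradiction|]. simpl in HT; lia.
Qed.

Lemma f2_spec x : 0 < x -> wenet_bound x (f2 x) /\ (1 <= f2 x)%nat.
Proof.
  intros Hx. unfold f2. destruct (Rle_dec 1 x) as [H|H].
  - split; [apply wenet_one; auto|lia].
  - set (Pf := fun f => wenet_bound x f /\ forall g, wenet_bound x g -> (f <= g)%nat).
    assert (Ex : exists f, Pf f).
    { destruct (nat_min_exists (wenet_bound x) (wenet_exists x Hx)) as [f Hf]. exists f; exact Hf. }
    pose proof (epsilon_spec (inhabits 0%nat) Pf Ex) as [H1 _].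
    split; [exact H1|]. apply (wenet_pos x); [lra|exact H1].
Qed.

Lemma pairs_len (l : list point) : (2 * length (pairs l) + length l = length l * length l)%nat.
Proof.
  induction l as [|a l IH]; simpl; auto. rewrite length_app, length_map. nia.
Qed.

Lemma num_edges_bound F l : 2 * INR (num_edges F l) <= INR (length l) * INR (length l) - INR (length l).
Proof.
  pose proof (pairs_len l). assert (num_edges F l <= length (pairs l))%nat by apply filter_length_le.
  apply le_INR in H0. apply (f_equal INR) in H. rewrite plus_INR, !mult_INR in H. simpl INR in H. lra.
Qed.

Lemma div_nonneg a b : 0 <= a -> 0 < b -> 0 <= a / b.
Proof. intros. unfold Rdiv. apply Rmult_le_pos; [lra|left; apply Rinv_0_lt_compat; lra]. Qed.

Lemma Fk_sym E k : (forall a b, E a b = E b a) -> forall a b, Fk E k a b = Fk E k b a.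
Proof. intros HE a b. unfold Fk. rewrite HE. destruct (k a), (k b); auto. Qed.

Section Tree.
Variable E : point -> point -> bool.
Hypothesis HE : forall a b, E a b = E b a.
Variable x : R.
Hypothesis Hx : 0 < x.
Variable f : nat.
Hypothesis Hf : wenet_bound x f.
Variable t : R.
Hypothesis Ht : 0 < t.
Variable T0 : nat.
Hypothesis HT0 : (0 < T0)%nat.
Hypothesis HT1 : t <= INR T0.
Hypothesis HT2 : INR T0 <= t + 1.

Lemma tree (d : nat) : forall (B : nat) (Q : list point), NoDup Q -> (length Q <= 2 ^ d * B)%nat ->
  exists TQ, INR (length TQ) <= INR (2 ^ d) * INR f + INR (num_edges E Q) / t /\
  forall K, convex K -> forall k : point -> bool, (forall p, In p Q -> k p = true -> K p) ->
    (forall z, In z TQ -> ~ K z) ->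
    INR (num_edges (Fk E k) Q) <= (INR (2 ^ d) - 1) * t + INR (length (filter k Q)) * (x * INR B - 1) / 2.
Proof.
  induction d as [|d IH]; intros B Q HQ HlQ.
  - simpl in HlQ. destruct (wenet_use x f Hf Q HQ) as [TQ [HTQ HTQK]].
    exists TQ. split.
    + apply le_INR in HTQ. simpl INR. pose proof (pos_INR (num_edges E Q)).
      assert (0 <= INR (num_edges E Q) / t) by (apply div_nonneg; lra). lra.
    + intros K HK k Hk Hn. simpl INR.
      rewrite <- num_edges_filter. pose proof (num_edges_bound E (filter k Q)) as Hb.
      set (s := INR (length (filter k Q))) in *.
      assert (Hs : s = 0 \/ s < x * INR (length Q)).
      { destruct (Rlt_dec (s) (x * INR (length Q))) as [H|H]; [right; auto|left].
        destruct (Nat.eq_dec (length (filter k Q)) 0) as [El|El]; [unfold s; rewrite El; auto|].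
        exfalso.
        destruct (HTQK K HK (filter k Q)) as [z [Hz Kz]].
        - apply NoDup_filter; auto.
        - intros y Hy; apply filter_In in Hy; tauto.
        - rewrite Forall_forall; intros y Hy; apply filter_In in Hy; apply Hk; tauto.
        - unfold s in H; lra.
        - lia.
        - exact (Hn z Hz Kz). }
      assert (HlQ' : INR (length Q) <= INR B) by (apply le_INR; lia).
      assert (0 <= s) by apply pos_INR.
      destruct Hs as [Hs|Hs].
      * rewrite Hs in *. simpl. pose proof (pos_INR (num_edges E (filter k Q))). nra.
      * assert (s <= x * INR B) by nra. nra.
  - set (k0 := Nat.min (length Q) (2 ^ d * B)).
    destruct (split_lemma Q k0) as [L [Rr [x0 [HP' [HL [HxL HxR]]]]]]; [unfold k0; lia|].
    assert (HLR : (length L + length Rr = length Q)%nat)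
      by (rewrite (Permutation_length HP'), length_app; auto).
    assert (HNL : NoDup (L ++ Rr)) by (apply (Permutation_NoDup HP'); auto).
    apply NoDup_app_remove_r in HNL as HNL1; apply NoDup_app_remove_l in HNL as HNL2.
    assert (HpowS : (2 ^ S d = 2 * 2 ^ d)%nat) by reflexivity.
    destruct (IH B L HNL1) as [TL [HTL HTLK]]; [unfold k0 in HL; lia|].
    destruct (IH B Rr HNL2) as [TR [HTR HTRK]]; [unfold k0 in HL; rewrite HpowS in HlQ; lia|].
    set (Pr := filter (F2 E) (list_prod L Rr)).
    destruct (line_hit x0 Pr T0 HT0) as [Z [HZ HZK]].
    { intros [a b] Hab. unfold Pr in Hab. apply filter_In in Hab as [Hab _].
      apply in_prod_iff in Hab. simpl. split; [apply HxL|apply HxR]; tauto. }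
    assert (HEQ : num_edges E Q = (num_edges E L + num_edges E Rr + length Pr)%nat)
      by (rewrite (num_edges_perm E HE _ _ HP'); apply num_edges_app).
    exists (TL ++ TR ++ Z). split.
    + rewrite !length_app, !plus_INR, HEQ, !plus_INR, HpowS, mult_INR.
      assert (HZt : INR (length Z) <= INR (length Pr) / t).
      { apply le_INR in HZ. rewrite mult_INR in HZ.
        apply Rmult_le_reg_r with t; [lra|]. unfold Rdiv. rewrite Rmult_assoc, Rinv_l by lra.
        pose proof (pos_INR (length Z)). nra. }
      replace (INR 2 * INR (2 ^ d) * INR f) with (2 * (INR (2^d) * INR f)) by (simpl; ring).
      replace ((INR (num_edges E L) + INR (num_edges E Rr) + INR (length Pr)) / t)
        with (INR (num_edges E L) / t + INR (num_edges E Rr) / t + INR (length Pr) / t) by (field; lra).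
      lra.
    + intros K HK k Hk Hn.
      assert (HinL : forall p, In p L -> In p Q)
        by (intros p Hp; apply (Permutation_in _ (Permutation_sym HP')), in_or_app; auto).
      assert (HinR : forall p, In p Rr -> In p Q)
        by (intros p Hp; apply (Permutation_in _ (Permutation_sym HP')), in_or_app; auto).
      pose proof (HTLK K HK k (fun p Hp => Hk p (HinL p Hp))
                   (fun z Hz => Hn z (in_or_app _ _ _ (or_introl Hz)))) as EL.
      pose proof (HTRK K HK k (fun p Hp => Hk p (HinR p Hp))
                   (fun z Hz => Hn z (in_or_app _ _ _ (or_intror (in_or_app _ _ _ (or_introl Hz)))))) as ER.
      rewrite (num_edges_perm (Fk E k) (Fk_sym E k HE) _ _ HP'), num_edges_app.
      rewrite (Permutation_filter_length k _ _ HP'), filter_app, length_app.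
      set (g := fun pr : point * point => k (fst pr) && k (snd pr)).
      assert (Hcr : length (filter (F2 (Fk E k)) (list_prod L Rr)) = length (filter g Pr)).
      { unfold Pr. rewrite filter_filter'. f_equal; try (apply filter_ext; intros [a b];
        unfold F2, Fk, g; simpl; destruct (E a b), (k a), (k b); auto). }
      assert (Hlt : (length (filter g Pr) < T0)%nat).
      { destruct (le_lt_dec T0 (length (filter g Pr))) as [Hc|Hc]; auto. exfalso.
        assert (G0 : forall pr, In pr Pr -> g pr = true -> K (fst pr) /\ K (snd pr)).
        { intros [a b] Hab G. unfold g in G; simpl in G. apply andb_prop in G as [G1 G2].
          unfold Pr in Hab. apply filter_In in Hab as [Hab _]. apply in_prod_iff in Hab as [Ha Hb].
          simpl; split; apply Hk; auto. }
        destruct (HZK g K HK G0 Hc) as [z [Hz Kz]].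
        apply (Hn z); auto. apply in_or_app; right; apply in_or_app; right; auto. }
      assert (Hcr' : INR (length (filter g Pr)) <= t).
      { assert (Hc' : (Nat.succ (length (filter g Pr)) <= T0)%nat) by exact Hlt.
        apply le_INR in Hc'. rewrite S_INR in Hc'. lra. }
      rewrite Hcr, !plus_INR, HpowS, mult_INR. simpl (INR 2). lra.
Qed.
End Tree.

Lemma log_exists (r : nat) : (1 <= r)%nat -> exists d, (r <= 2 ^ d /\ 2 ^ d < 2 * r)%nat.
Proof.
  intros Hr. destruct (Nat.eq_dec r 1) as [->|Hr1]; [exists 0%nat; simpl; lia|].
  pose proof (Nat.log2_up_spec r ltac:(lia)) as [H1 H2]. pose proof (Nat.log2_up_pos r ltac:(lia)).
  exists (Nat.log2_up r). split; auto.
  destruct (Nat.log2_up r) as [|e]; [lia|]. simpl Nat.pred in H1. simpl. lia.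
Qed.

Theorem mainTheorem4 :
  exists C c : R, 0 < C /\ 0 < c /\
  forall (P : list point) (E : point -> point -> bool) (eps sigma : R) (r : nat),
    (0 < length P)%nat ->
    general_position P ->
    (forall p q, E p q = E q p) ->
    0 < eps <= 1 -> 0 < sigma <= 1 -> (1 <= r)%nat ->
    forall Fam : (point -> Prop) -> Prop,
      (forall K, Fam K -> in_calK P E eps sigma K) ->
      exists T : list point,
        (forall K, Fam K -> exists t, In t T /\ K t) /\
        INR (length T) <=
          C * (INR r * INR (f2 (c * eps * sigma * INR r))
               + (INR r ^ 2 * INR (num_edges E P))
                 / (sigma * eps ^ 2 * INR (length P) ^ 2)).
Proof.
  exists 8, (1/8). split; [lra|]. split; [lra|].
  intros P E eps sigma r Hn HGP HE Heps Hsig Hr Fam HFam.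
  set (x := 1 / 8 * eps * sigma * INR r).
  assert (Hrpos : 1 <= INR r) by (apply (le_INR 1 r) in Hr; simpl in Hr; lra).
  assert (Hx : 0 < x) by (unfold x; apply Rmult_lt_0_compat; [|lra]; nra).
  destruct (f2_spec x Hx) as [Hf Hf1].
  set (f := f2 x) in *.
  set (n := length P) in *.
  assert (Hnpos : 1 <= INR n) by (apply (le_INR 1 n) in Hn; simpl in Hn; lra).
  set (D := sigma * eps ^ 2 * INR n ^ 2).
  assert (HD : 0 < D) by (unfold D; apply Rmult_lt_0_compat; [apply Rmult_lt_0_compat; [lra|apply pow_lt; lra]|apply pow_lt; lra]).
  assert (Hf1' : 1 <= INR f) by (apply (le_INR 1 f) in Hf1; simpl in Hf1; lra).
  assert (Hsec : 0 <= INR r ^ 2 * INR (num_edges E P) / D)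
    by (apply div_nonneg; [apply Rmult_le_pos; [apply pow_le; lra|apply pos_INR]|lra]).
  destruct HGP as [HP _].
  destruct (le_lt_dec r n) as [Hrn|Hrn].
  2:{ exists P. split.
      - intros K HK. destruct (HFam K HK) as [_ [PK [HPK [HI [HF [Hl _]]]]]].
        destruct PK as [|p PK']; [simpl in Hl; fold n in Hl; nra|].
        exists p. split; [apply HI; simpl; auto|]. inversion HF; auto.
      - apply lt_INR in Hrn. fold n D. nra. }
  destruct (log_exists r Hr) as [d [Hd1 Hd2]].
  set (B := ((n + r - 1) / r)%nat).
  assert (HB1 : (n <= r * B)%nat /\ (r * B <= n + r - 1)%nat).
  { pose proof (Nat.div_mod_eq (n + r - 1) r). pose proof (Nat.mod_upper_bound (n + r - 1) r ltac:(lia)).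
    unfold B. lia. }
  destruct HB1 as [HB1 HB2].
  assert (HBr : INR B * INR r <= 2 * INR n).
  { apply le_INR in HB2. rewrite mult_INR, minus_INR, plus_INR in HB2 by lia. simpl in HB2.
    apply le_INR in Hrn. lra. }
  set (t := sigma * eps ^ 2 * INR n ^ 2 / (8 * INR r)).
  assert (Ht : 0 < t) by (unfold t; apply Rdiv_lt_0_compat; [exact HD|lra]).
  destruct (nat_ceil t Ht) as [T0 [HT0 [HT1 HT2]]].
  destruct (tree E HE x Hx f Hf t Ht T0 HT0 HT1 HT2 d B P HP) as [TQ [HTQ HTQK]].
  { apply Nat.le_trans with (r * B)%nat; auto. apply Nat.mul_le_mono_r; auto. }
  exists TQ. split.
  - intros K HK. destruct (HFam K HK) as [HKc [PK [HPK [HI [HF [Hl He]]]]]].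
    apply NNPP. intro Hno.
    assert (Hn' : forall z, In z TQ -> ~ K z) by (intros z Hz Kz; apply Hno; eauto).
    assert (Hk : forall p, In p P -> memb PK p = true -> K p).
    { intros p _ Hp. apply memb_true in Hp. rewrite Forall_forall in HF; auto. }
    pose proof (HTQK K HKc (memb PK) Hk Hn') as Hb.
    rewrite <- num_edges_filter, count_memb in Hb by auto.
    rewrite <- (num_edges_perm E HE _ _ (perm_memb PK P HPK HP HI)) in Hb.
    fold n in Hl. set (m := INR (length PK)) in *.
    assert (H2d : INR (2 ^ d) - 1 <= 2 * INR r) by (apply lt_INR in Hd2; rewrite mult_INR in Hd2; simpl in Hd2; lra).
    assert (Hm : 0 < m) by nra.
    assert (Hxb : x * INR B <= sigma * m / 4).
    { unfold x. apply Rmult_le_reg_r with (INR r); [lra|].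
      assert (eps * INR n <= m) by lra.
      replace (1 / 8 * eps * sigma * INR r * INR B * INR r) with (1/8 * eps * sigma * INR r * (INR B * INR r)) by ring.
      apply Rle_trans with (1/8 * eps * sigma * INR r * (2 * INR n)).
      - apply Rmult_le_compat_l; [|lra].
        apply Rmult_le_pos; [|lra]. apply Rmult_le_pos; [|lra]. apply Rmult_le_pos; lra.
      - assert (0 <= sigma * INR r * (m - eps * INR n)) by (apply Rmult_le_pos; [apply Rmult_le_pos|]; lra).
        nra. }
    assert (Htt : (INR (2 ^ d) - 1) * t <= sigma * m * m / 4).
    { apply Rle_trans with (2 * INR r * t); [apply Rmult_le_compat_r; lra|].
      unfold t. replace (2 * INR r * (sigma * eps ^ 2 * INR n ^ 2 / (8 * INR r))) with (sigma * (eps * INR n) * (eps * INR n) / 4) by (field; lra).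
      assert (0 <= eps * INR n) by nra. assert (eps * INR n <= m) by lra.
      apply Rmult_le_compat_r; [lra|]. apply Rmult_le_compat; nra. }
    assert (Hmm : m * (x * INR B - 1) / 2 <= m * (sigma * m / 4 - 1) / 2).
    { unfold Rdiv. apply Rmult_le_compat_r; [lra|]. apply Rmult_le_compat_l; lra. }
    assert (Q1 : 0 < sigma * m * m) by (apply Rmult_lt_0_compat; [apply Rmult_lt_0_compat|]; lra).
    assert (Q2 : 0 <= m * (1 - sigma)) by (apply Rmult_le_pos; lra).
    lra.
  - apply Rle_trans with (INR (2 ^ d) * INR f + INR (num_edges E P) / t); auto.
    apply lt_INR in Hd2. rewrite mult_INR in Hd2. simpl INR in Hd2.
    assert (E1 : INR (num_edges E P) / t = 8 * INR r * INR (num_edges E P) / D) by (unfold t, D; field; lra).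
    rewrite E1. fold D.
    assert (E2 : 8 * INR r * INR (num_edges E P) / D <= 8 * (INR r ^ 2 * INR (num_edges E P) / D)).
    { unfold Rdiv. rewrite <- Rmult_assoc. apply Rmult_le_compat_r; [left; apply Rinv_0_lt_compat; lra|].
      pose proof (pos_INR (num_edges E P)). simpl.
      assert (0 <= (INR r * INR r - INR r) * INR (num_edges E P)) by (apply Rmult_le_pos; nra).
      nra. }
    assert (INR (2 ^ d) * INR f <= 8 * (INR r * INR f)) by nra.
    lra.
Qed.
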